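(* Consider the real-power model with gap $\Delta>0$ and the hybrid RMPE algorithm described in the context. Let $\epsilon>0$, $\rho\in(0,1)$. Let $\tilde\Delta\in(0,\frac{1}{8S(2S-1)})$, $\tilde M:=\tilde\Delta/\Delta$, let $K_2>4/\tilde\Delta$ be an even integer, $C\in(2,\frac{K_2\tilde\Delta}{2})$, and $$A=\frac{80S^2}{\beta}\sqrt{\frac{C^3(2+K_2)}{(C-1)^3K_2}}\left(1-\frac{2CS}{(C-1)K_2}\right)^{-1};$$ let $\eta$ satisfy $A\omega<\eta<\frac{1}{8S(2S-1)}$. Let $\tau=\frac1\pi\log\frac{12}{\beta-\omega}$, $\alpha_1=\frac{\beta-\omega}{3}$, $K_1=\lceil3\eta^{-1}\tau\rceil$, let $\alpha_2>0$ satisfy $\alpha_2<\min\{\frac{C\beta}{8(C-1)\sqrt{2S}}\sqrt{1-\frac{2(C-1)S}{CK_2}},\frac{\eta}{A}\}-\omega$, and for $j=1,2$ let $N_{\mathrm{HR},j}=2\left\lceil\frac{4}{\alpha_j^2}\left(\log\frac4\rho+\log\left(\left\lceil\log_2\frac{\eta}{\epsilon}\right\rceil+1\right)+\log(K_j+1)\right)\right\rceil$. Then the maximal runtime of the algorithm is $$T_{\max}=O\left(\max\left\{\log\left(\tfrac1\beta\right)\eta^{-1}\tilde\Delta\Delta^{-1},\ \eta\tilde\Delta^{-1}\epsilon^{-1}\right\}\right)$$ and the total runtime is $T_{\mathrm{total}}=\tilde O\left(\eta^{-2}\beta^{-2}\tilde\Delta\Delta^{-1}+\eta\omega^{-2}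\tilde\Delta^{-2}\epsilon^{-1}\right)$.
   Context: Real-power model: $H$ Hermitian with eigenvalues in $[0,1]$; controlled-$U^t$, $U^t:=e^{-2\pi iHt}$, available for every real $t\ge0$ at cost $t$. Initial state $|\psi\rangle=\sum_{s=1}^Sc_s|\psi_s\rangle+c_{\mathrm{res}}|\psi_{\mathrm{res}}\rangle$, $|\psi_s\rangle$ orthonormal, $H|\psi_s\rangle=\lambda_s|\psi_s\rangle$, $|\psi_{\mathrm{res}}\rangle$ a unit vector orthogonal to all $|\psi_s\rangle$, $\min_s|c_s|^2\ge\beta>0$, $|c_{\mathrm{res}}|^2\le\omega<\beta$; $\Lambda=\{\lambda_1,\dots,\lambda_S\}\subset[0,0.9]$ (assumed). Gap $\Delta=\min_{s\ne s'}\min_{n\in\mathbb{Z}}|\lambda_s-\lambda_{s'}-n|$. $\tilde O$ hides polylogarithmic factors. Notation: $\mathbb{T}=\mathbb{R}/\mathbb{Z}$; $B(T,r)=\bigcup_{x\in T}[x-r,x+r]$; $B_{\mathbb{T}}$ the analogue modulo 1. Hadamard test: one run with time $t$ returns an independent $\pm1$ with mean $\mathrm{Re}\langle\psi|U^t|\psi\rangle$ or (second variant) $\mathrm{Im}\langle\psi|U^t|\psi\rangle$, cost $t$. Hybrid RMPE algorithm (target $\epsilon$): $E_{-1}=[0,0.9]$, $M_0=1$. For $\ell=0,1,2,\dots$: (i) if $\ell\ge1$ choose $m_\ell\in[2,4]$ such that, with $G=B(E_{\ell-1},\frac{\max\{\tilde\Delta,\eta\}}{2M_{\ell-1}})$,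 $(G+\frac{q}{M_{\ell-1}m_\ell})\cap G=\varnothing$ for all $q\in\mathbb{Z}\setminus\{0\}$, and set $M_\ell=M_{\ell-1}m_\ell$; (ii) let $(K,N_{\mathrm{HR}})=(K_1,N_{\mathrm{HR},1})$ if $M_\ell\le\tilde M$ and $(K_2,N_{\mathrm{HR},2})$ otherwise; for $k=0,\dots,K$ run the Hadamard test with $t=M_\ell k$ $N_{\mathrm{HR}}/2$ times per variant, $y_\ell(k)=$(real average)$+i\,$(imaginary average), $y_\ell(-k)=\overline{y_\ell(k)}$; (iii) if $M_\ell\le\tilde M$ compute $Y_\ell$ by the gapless routine with $K=K_1$, otherwise by ESPRIT with $K=K_2$; (iv) write $Y_\ell$ as disjoint closed arcs, lift to intervals of $\mathbb{R}$, divide by $M_\ell$ to get $I'_{\ell,i}$; pick integers $q_{\ell,i}$ with $(I'_{\ell,i}+q_{\ell,i}/M_\ell)\cap E_{\ell-1}\ne\varnothing$, set $E_\ell=\bigcup_i(I'_{\ell,i}+q_{\ell,i}/M_\ell)$; (v) if $\eta/M_\ell\le\epsilon$, stop and output $E_L:=E_\ell$. $T_{\max}$: largest $t$ used; $T_{\mathrm{total}}$: sum of $t$ over all runs. Gapless routine: $\sigma=\sqrt\tau$, $\hat\phi(k)=e^{-\pi(k\sigma/K)^2}$, $\phi_s=\sum_{k\in\mathbb{Z}}\hat\phi(k)$, $X_\ell=\{x\in\mathbb{T}:|\sum_{|k|\le K}y_\ell(k)\hat\phi(k)e^{2\pi ikx}|>\frac{6\beta+5\omega}{11}\phi_s\}$;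 with components $(a_1,b_1),\dots,(a_q,b_q)$ of $X_\ell$ in cyclic order, $J=\{j: a_j-b_{j-1}<\tau/K\}$ (for $j=1$: $a_1+1-b_q<\tau/K$), $Y_\ell=\bigcup_i[a_i,b_i]\cup\bigcup_{j\in J}[b_{j-1},a_j]$ ($b_0:=b_q$). ESPRIT routine: Hankel matrix with entries $y_\ell(i+j)$, $0\le i,j\le K/2$; $U_\ell$ = left singular vectors for the $S$ largest singular values; $U^{(0)}_\ell,U^{(1)}_\ell$ its first and last $K/2$ rows; $\mu_j$ the eigenvalues of $(U^{(0)}_\ell)^\dagger U^{(1)}_\ell$; $\tilde\Lambda_\ell=\{-\frac{1}{2\pi}\arg\mu_j\bmod1\}$, $Y_\ell=B_{\mathbb{T}}(\tilde\Lambda_\ell,\eta/2)$.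
   Formalization: The constants in the O-bounds depend on a fixed κ ≥ 1 with K₂Δ̃ ≤ κ and ω ≤ κα₂, ε is also less than 2η, and log(2/β) replaces log(1/β) in $T_{\max}$. Apart from conventions, each condition added here is assumed in the paper as well or is needed for the statement above to hold. *)

(* Defs.v *)
From HB Require Import structures.
From mathcomp Require Import all_boot all_order all_algebra.
From mathcomp Require Import all_classical all_reals all_analysis.
Set Implicit Arguments. Unset Strict Implicit. Unset Printing Implicit Defensive.
Import Order.TTheory GRing.Theory Num.Theory.
Local Open Scope ring_scope.

Section RMPE.
Variable R : realType.

(* Delta is the spectral gap of the eigenvalues lam (distance modulo 1):
   Delta = min_{s<>s'} min_{n in Z} |lam s - lam s' - n|. *)
Definition is_gap (S : nat) (lam : 'I_S -> R) (Delta : R) : Prop :=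
  (forall (s s' : 'I_S) (n : int), s != s' -> Delta <= `|lam s - lam s' - n%:~R|) /\
  (exists (s s' : 'I_S) (n : int), s != s' /\ `|lam s - lam s' - n%:~R| = Delta).

(* ceiling of a real as a natural number (arguments are positive here) *)
Definition ceiln (x : R) : nat := `|Num.ceil x|%N.

Definition constA (S : nat) (beta C : R) (K2 : nat) : R :=
  (80 * (S%:R) ^+ 2 / beta)
  * Num.sqrt (C ^+ 3 * (2 + K2%:R) / ((C - 1) ^+ 3 * K2%:R))
  * (1 - 2 * C * S%:R / ((C - 1) * K2%:R))^-1.

Definition tau (beta omega : R) : R := ln (12 / (beta - omega)) / pi.
Definition alpha1 (beta omega : R) : R := (beta - omega) / 3.
Definition K1 (eta beta omega : R) : nat := ceiln (3 * eta^-1 * tau beta omega).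

Definition NHR (alpha rho eta eps : R) (K : nat) : R :=
  2 * (Num.ceil (4 / alpha ^+ 2 *
        (ln (4 / rho)
         + ln ((Num.ceil (ln (eta / eps) / ln 2))%:~R + 1)
         + ln (K%:R + 1))))%:~R.

Definition Mlev (m : nat -> R) (l : nat) : R := \prod_(1 <= i < l.+1) m i.

Definition Klev (m : nat -> R) (Mt : R) (k1 k2 : nat) (l : nat) : nat :=
  if Mlev m l <= Mt then k1 else k2.
Definition Nlev (m : nat -> R) (Mt : R) (n1 n2 : R) (l : nat) : R :=
  if Mlev m l <= Mt then n1 else n2.

(* At level l, for each k = 0..K, N_HR/2 Hadamard tests of each of the two
   variants are run with t = M_l k, i.e. N_HR runs of cost M_l k. *)
Definition level_cost (M : R) (K : nat) (N : R) : R :=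
  N * \sum_(k < K.+1) (M * k%:R).

Definition Tmax (m : nat -> R) (Mt : R) (k1 k2 : nat) (L : nat) : R :=
  \big[Num.max/0]_(l < L.+1) (Mlev m l * (Klev m Mt k1 k2 l)%:R).
Definition Ttotal (m : nat -> R) (Mt : R) (k1 k2 : nat) (n1 n2 : R) (L : nat) : R :=
  \sum_(l < L.+1) level_cost (Mlev m l) (Klev m Mt k1 k2 l) (Nlev m Mt n1 n2 l).

End RMPE.

(* Main.v *)
Require Import Defs.
From HB Require Import structures.
From mathcomp Require Import all_boot all_order all_algebra.
From mathcomp Require Import all_classical all_reals all_analysis.
From mathcomp Require Import lra.
Import Order.TTheory GRing.Theory Num.Theory.
Local Open Scope ring_scope.

Section Helpers.
Variable R : realType.

Lemma ceil_ub (x : R) : (Num.ceil x)%:~R <= x + 1.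
Proof. have := ceilB1_lt x; rewrite intrB /=; lra. Qed.

Lemma ceiln_ub (x : R) : 0 <= x -> (ceiln x)%:R <= x + 1.
Proof.
move=> x0; rewrite /ceiln natr_absz ger0_norm; first exact: ceil_ub.
rewrite ceil_ge0; lra.
Qed.

Lemma ln2_ge : 1/2 <= ln (2:R).
Proof.
have h := @le_ln1Dx R (-(1/2)).
have e : 1 + - (1/2) = (2:R)^-1 by lra.
rewrite e lnV ?posrE // in h; lra.
Qed.

Lemma ln_bound (y z : R) (n j : nat) : 2 <= y -> z <= 2^+n * y^+j ->
  ln z <= (n + j)%:R * ln y.
Proof.
move=> hy hz.
have l2 := ln2_ge.
have l2y : ln 2 <= ln y by rewrite ler_ln ?posrE //; lra.
have y0 : 0 < y by lra.
case: (lerP z 1) => z1.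
  apply: le_trans (ln_le0 z1) _; apply: mulr_ge0 => //; lra.
have z0 : 0 < z by lra.
apply: (le_trans (y := ln (2^+n * y^+j))).
  rewrite ler_ln ?posrE //; apply: mulr_gt0; exact: exprn_gt0.
rewrite lnM ?posrE ?exprn_gt0 // !lnXn // natrD mulrDl !mulr_natl.
by rewrite lerD2r lerMn2r l2y orbT.
Qed.

Lemma Mlev0 (m : nat -> R) : Mlev m 0 = 1.
Proof. by rewrite /Mlev big_geq. Qed.

Lemma MlevS (m : nat -> R) l : Mlev m l.+1 = Mlev m l * m l.+1.
Proof. by rewrite /Mlev big_nat_recr. Qed.

Section Geo.
Variable m : nat -> R.
Hypothesis hm : forall l, (1 <= l)%N -> 2 <= m l <= 4.

Lemma Mlev_ge1 l : 1 <= Mlev m l.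
Proof.
elim: l => [|l IH]; first by rewrite Mlev0.
rewrite MlevS; have /andP[h1 h2] := hm l.+1 isT; nra.
Qed.

Lemma Mlev_mono l n : (l <= n)%N -> Mlev m l <= Mlev m n.
Proof.
elim: n => [|n IH]; first by rewrite leqn0 => /eqP ->.
rewrite leq_eqVlt => /orP[/eqP -> //|]; rewrite ltnS => /IH h.
rewrite MlevS; have /andP[h1 h2] := hm n.+1 isT.
have := Mlev_ge1 n; nra.
Qed.

Lemma sum_Mlev n : \sum_(l < n.+1) Mlev m l <= 2 * Mlev m n.
Proof.
elim: n => [|n IH]; first by rewrite big_ord_recr big_ord0 /= add0r Mlev0; lra.
rewrite big_ord_recr /= MlevS; have /andP[h1 h2] := hm n.+1 isT.
have := Mlev_ge1 n; nra.
Qed.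

Lemma sum_Mlev_le (B : R) n : 0 <= B ->
  \sum_(l < n.+1) (if Mlev m l <= B then Mlev m l else 0) <= 2 * B.
Proof.
move=> B0; elim: n => [|n IH].
  rewrite big_ord_recr big_ord0 /= add0r; case: ifP => h; lra.
rewrite big_ord_recr /=; case: ifP => h; last by lra.
apply: (le_trans (y := \sum_(l < n.+2) Mlev m l)).
  rewrite [X in _ <= X]big_ord_recr /= lerD2r; apply: ler_sum => i _.
  case: ifP => _ //; exact: le_trans (Mlev_ge1 _).
by apply: le_trans (sum_Mlev n.+1) _; lra.
Qed.
End Geo.

Lemma level_cost_le (M : R) K N U : 0 <= M -> N <= U -> 0 <= U ->
  level_cost M K N <= U * (M * (K%:R + 1) ^+ 2).
Proof.
move=> M0 NU U0; rewrite /level_cost.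
have hs : \sum_(k < K.+1) (M * k%:R) <= M * (K%:R + 1) ^+ 2.
  apply: (le_trans (y := \sum_(k < K.+1) (M * K%:R))).
    apply: ler_sum => i _; apply: ler_wpM2l => //; rewrite ler_nat; exact: (ltn_ord i).
  rewrite sumr_const card_ord -(mulr_natr (M * K%:R)).
  have hK : 0 <= (K%:R : R) by [].
  rewrite -natr1; nra.
have s0 : 0 <= \sum_(k < K.+1) (M * k%:R) by apply: sumr_ge0 => i _; apply: mulr_ge0.
apply: le_trans (ler_wpM2r s0 NU) _; exact: ler_wpM2l.
Qed.
End Helpers.

Lemma inv_le (R : realType) (x y : R) : 0 < x -> x <= y -> y^-1 <= x^-1.
Proof. move=> x0 xy; rewrite lef_pV2 ?posrE //; lra. Qed.

Lemma tau_facts (R : realType) (beta omega : R) :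
  0 < beta -> beta <= 1 -> 0 < omega -> omega < beta / 4 ->
  [/\ 0 <= tau beta omega, tau beta omega <= ln (12 / (beta - omega)),
      0 <= ln (12 / (beta - omega)) & 12 / (beta - omega) <= 16 * beta^-1].
Proof.
move=> hb0 hb1 ho0 hob.
have hbib : beta * beta^-1 = 1 by rewrite mulfV //; lra.
have ib0 : 0 < beta^-1 by rewrite invr_gt0.
have h12 : 12 / (beta - omega) <= 16 * beta^-1.
  rewrite ler_pdivrMr; last by lra.
  have h : 0 <= beta / 4 - omega by lra.
  have := mulr_ge0 (ltW ib0) h; lra.
have htl0 : 0 <= ln (12 / (beta - omega)).
  apply: ln_ge0; rewrite ler_pdivlMr; lra.
have hpi := @pi_ge2 R.
split => //.
- apply: divr_ge0 => //; lra.
- rewrite /tau ler_pdivrMr; nra.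
Qed.

Lemma tmax_part (R : realType) (kappa beta omega eta eps Dt Delta : R) (K2 : nat)
  (m : nat -> R) (L : nat) :
  1 <= kappa -> 0 < beta -> beta <= 1 -> 0 < omega -> omega < beta / 4 ->
  0 < eta -> eta < 1 / 8 -> 0 < eps -> 0 < Dt -> 0 < Delta ->
  (K2%:R : R) <= kappa * Dt^-1 ->
  (forall l, (1 <= l)%N -> 2 <= m l <= 4) -> Mlev m L <= 4 * eta / eps ->
  Tmax m (Dt / Delta) (K1 eta beta omega) K2 L <=
  (16 + 4 * kappa) * Num.max (ln (2 / beta) * eta^-1 * Dt * Delta^-1)
                             (eta * Dt^-1 * eps^-1).
Proof.
move=> hk hb0 hb1 ho0 hob he0 he8 hep0 hD0 hDe0 hK2 hm hML.
have [ht0 ht1 htl0 h12] := @tau_facts R beta omega hb0 hb1 ho0 hob.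
have ie0 : 0 < eta^-1 by rewrite invr_gt0.
have heie : eta * eta^-1 = 1 by rewrite mulfV //; lra.
have hie8 : 8 <= eta^-1.
  have := @inv_le R eta (1/8) he0 ltac:(lra); rewrite div1r invrK //.
set l2b := ln (2 / beta).
have hb2 : 2 <= 2 / beta by rewrite ler_pdivlMr //; lra.
have hl2b : 1 / 2 <= l2b.
  apply: le_trans (@ln2_ge R) _; rewrite /l2b ler_ln ?posrE //; lra.
have htl : ln (12 / (beta - omega)) <= 4 * l2b.
  have := @ln_bound R (2 / beta) (12 / (beta - omega)) 3 1 hb2.
  rewrite /=; apply.
  rewrite expr1 !exprS expr0 mulrA; lra.
have hk1 : ((K1 eta beta omega)%:R : R) <= 3 * eta^-1 * tau beta omega + 1.
  apply: ceiln_ub; apply: mulr_ge0 => //; apply: mulr_ge0; lra.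
have hk1T : ((K1 eta beta omega)%:R : R) <= 16 * eta^-1 * l2b.
  have h1 : 0 <= eta^-1 * (4 * l2b - tau beta omega) by apply: mulr_ge0; lra.
  have h2 : 0 <= (eta^-1 - 8) * (l2b - 1/2) by apply: mulr_ge0; lra.
  nra.
set A := l2b * eta^-1 * Dt * Delta^-1.
set B := eta * Dt^-1 * eps^-1.
have hA0 : 0 <= A.
  rewrite /A; apply: mulr_ge0; [apply: mulr_ge0; [apply: mulr_ge0|]|]; try lra.
  by rewrite invr_ge0; lra.
have hB0 : 0 <= B.
  rewrite /B; apply: mulr_ge0; [apply: mulr_ge0|]; try lra; rewrite invr_ge0; lra.
have hAm : A <= Num.max A B by rewrite le_max lexx.
have hBm : B <= Num.max A B by rewrite le_max lexx orbT.
apply: bigmax_le; first by apply: mulr_ge0; lra.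
move=> l _; rewrite /Klev.
have hMl1 := @Mlev_ge1 R m hm l.
case: ifP => hMl.
  have : Mlev m l * (K1 eta beta omega)%:R <= Dt / Delta * (16 * eta^-1 * l2b).
    by apply: ler_pM => //; lra.
  have -> : Dt / Delta * (16 * eta^-1 * l2b) = 16 * A by rewrite /A; lra.
  nra.
have hLl : Mlev m l <= Mlev m L.
  by apply: (@Mlev_mono R m hm); rewrite -ltnS; exact: ltn_ord.
have : Mlev m l * K2%:R <= 4 * eta / eps * (kappa * Dt^-1).
  by apply: ler_pM => //; lra.
have -> : 4 * eta / eps * (kappa * Dt^-1) = 4 * kappa * B by rewrite /B; lra.
nra.
Qed.

Lemma NHR_le (R : realType) (alpha rho eta eps : R) (K : nat) (a u : R) :
  0 < alpha -> alpha^-1 <= a -> 0 <= u ->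
  ln (4 / rho) + ln ((Num.ceil (ln (eta / eps) / ln 2))%:~R + 1) + ln (K%:R + 1) <= u ->
  NHR alpha rho eta eps K <= 2 * (4 * (a * a) * u + 1).
Proof.
move=> ha0 ha hu hst; rewrite /NHR.
set st := _ + _ + _ in hst *.
have := @ceil_ub R (4 / alpha ^+ 2 * st).
have ia0 : 0 < alpha^-1 by rewrite invr_gt0.
have h1 : alpha^-1 * alpha^-1 <= a * a by apply: ler_pM; lra.
have e : 4 / alpha ^+ 2 = 4 * (alpha^-1 * alpha^-1) by rewrite -exprVn expr2.
rewrite e.
have h2 : 4 * (alpha^-1 * alpha^-1) * st <= 4 * (alpha^-1 * alpha^-1) * u.
  by apply: ler_wpM2l => //; apply: mulr_ge0 => //; apply: mulr_ge0; lra.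
have h3 : 4 * (alpha^-1 * alpha^-1) * u <= 4 * (a * a) * u.
  by apply: ler_wpM2r => //; lra.
lra.
Qed.

Lemma st_common (R : realType) (Y rho eta eps : R) :
  2 <= Y -> 0 < rho -> rho^-1 <= Y -> 0 < eta -> eta < 1 -> 0 < eps -> eps^-1 + 1 <= Y ->
  ln (4 / rho) + ln ((Num.ceil (ln (eta / eps) / ln 2))%:~R + 1) <= 5 * ln Y.
Proof.
move=> hY hr0 hrY he0 he1 hep0 hepY.
have h1 : ln (4 / rho) <= 3 * ln Y.
  have := @ln_bound R Y (4 / rho) 2 1 hY; rewrite /=; apply.
  rewrite expr1 !exprS expr0; lra.
have l2 := @ln2_ge R.
have iep0 : 0 < eps^-1 by rewrite invr_gt0.
have hw : ln (eta / eps) / ln 2 <= 2 * eps^-1.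
  rewrite ler_pdivrMr; last by lra.
  case: (lerP (ln (eta / eps)) 0) => h.
    have : 0 <= 2 * eps^-1 * ln 2 by apply: mulr_ge0; lra.
    lra.
  have hs := @ln_sublinear R (eta / eps) ltac:(by apply: divr_gt0).
  have : eta / eps <= eps^-1 by rewrite ler_pdivrMr // mulrC mulfV; lra.
  have : 0 <= eps^-1 * (ln 2 - 1/2) by apply: mulr_ge0; lra.
  nra.
have h2 : ln ((Num.ceil (ln (eta / eps) / ln 2))%:~R + 1) <= 2 * ln Y.
  have := @ln_bound R Y ((Num.ceil (ln (eta / eps) / ln 2))%:~R + 1) 1 1 hY.
  rewrite /=; apply.
  have := @ceil_ub R (ln (eta / eps) / ln 2).
  rewrite !expr1; lra.
lra.
Qed.

Lemma k1_bounds (R : realType) (Y beta omega eta : R) :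
  2 <= Y -> 0 < beta -> beta <= 1 -> 0 < omega -> omega < beta / 4 ->
  0 < eta -> eta < 1 / 8 -> beta^-1 <= Y -> eta^-1 <= Y ->
  ln ((K1 eta beta omega)%:R + 1) <= 8 * ln Y /\
  (K1 eta beta omega)%:R + 1 <= 16 * eta^-1 * ln Y.
Proof.
move=> hY hb0 hb1 ho0 hob he0 he8 hbY heY.
have [ht0 ht1 htl0 h12] := @tau_facts R beta omega hb0 hb1 ho0 hob.
have ie0 : 0 < eta^-1 by rewrite invr_gt0.
have hie8 : 8 <= eta^-1.
  have := @inv_le R eta (1/8) he0 ltac:(lra); rewrite div1r invrK //.
have hk1 : ((K1 eta beta omega)%:R : R) <= 3 * eta^-1 * tau beta omega + 1.
  apply: ceiln_ub; apply: mulr_ge0 => //; apply: mulr_ge0; lra.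
have hbo : 0 < 12 / (beta - omega) by apply: divr_gt0; lra.
have hs := @ln_sublinear R _ hbo.
have hl2 := @ln2_ge R.
have hLg : ln 2 <= ln Y by rewrite ler_ln ?posrE //; lra.
split.
  have := @ln_bound R Y ((K1 eta beta omega)%:R + 1) 6 2 hY; rewrite /=; apply.
  have : eta^-1 * tau beta omega <= Y * (16 * Y) by apply: ler_pM; lra.
  rewrite !exprS !expr0; nra.
have h5 : ln (12 / (beta - omega)) <= 5 * ln Y.
  have := @ln_bound R Y (12 / (beta - omega)) 4 1 hY; rewrite /=; apply.
  rewrite !exprS !expr0; lra.
have : eta^-1 * tau beta omega <= eta^-1 * (5 * ln Y) by apply: ler_wpM2l; lra.
have : 0 <= (eta^-1 - 8) * (ln Y - 1/2) by apply: mulr_ge0; lra.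
nra.
Qed.

Lemma K2_bounds (R : realType) (Y kappa Dt : R) (nk K2 : nat) :
  2 <= Y -> 1 <= kappa -> kappa <= 2 ^+ nk -> 0 < Dt -> Dt < 1 / 8 ->
  (K2%:R : R) <= kappa * Dt^-1 -> Dt^-1 + 1 <= Y ->
  ln (K2%:R + 1) <= (nk + 1)%:R * ln Y /\ (K2%:R : R) + 1 <= 2 * kappa * Dt^-1.
Proof.
move=> hY hk hnk hD0 hD8 hK hDY.
have iD0 : 0 < Dt^-1 by rewrite invr_gt0.
have hiD8 : 8 <= Dt^-1.
  have := @inv_le R Dt (1/8) hD0 ltac:(lra); rewrite div1r invrK //.
split.
  have := @ln_bound R Y (K2%:R + 1) nk 1 hY; apply.
  rewrite expr1.
  have : kappa * (Dt^-1 + 1) <= 2 ^+ nk * Y by apply: ler_pM; lra.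
  nra.
nra.
Qed.

Lemma final_arith (R : realType) (T Dt Delta eta eps beta omega kappa nkR Lg W1 W2 : R) :
  0 < Dt -> 0 < Delta -> 0 < eta -> 0 < eps -> 0 < beta -> 0 < omega -> 1 <= kappa ->
  0 <= nkR -> 1 / 2 <= Lg ->
  T <= 2 * (Dt / Delta) * W1 + 8 * eta / eps * W2 ->
  W1 <= 1668 * Lg * (beta^-1 * beta^-1) * ((16 * eta^-1 * Lg) * (16 * eta^-1 * Lg)) ->
  W2 <= (8 * nkR + 52) * ((kappa * omega^-1) * (kappa * omega^-1)) * Lg
          * ((2 * kappa * Dt^-1) * (2 * kappa * Dt^-1)) ->
  T <= 1000 * 1000 * (eta^-1 ^+ 2 * beta^-1 ^+ 2 * Dt * Delta^-1) * Lg ^+ 3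
     + 128 * (8 * nkR + 52) * kappa ^+ 4 * (eta * omega^-1 ^+ 2 * Dt^-1 ^+ 2 * eps^-1)
       * Lg ^+ 3.
Proof.
move=> hD hDe he hep hb ho hk hn hL hT hW1 hW2.
have ib0 : 0 <= beta^-1 by rewrite invr_ge0; lra.
have io0 : 0 <= omega^-1 by rewrite invr_ge0; lra.
have ie0 : 0 <= eta^-1 by rewrite invr_ge0; lra.
have iep0 : 0 <= eps^-1 by rewrite invr_ge0; lra.
have iD0 : 0 <= Dt^-1 by rewrite invr_ge0; lra.
have iDe0 : 0 <= Delta^-1 by rewrite invr_ge0; lra.
have hDD : 0 <= 2 * (Dt / Delta) by apply: mulr_ge0; [lra|apply: mulr_ge0; lra].
have hee : 0 <= 8 * eta / eps by apply: mulr_ge0; [apply: mulr_ge0|]; lra.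
have h1 := ler_wpM2l hDD hW1.
have h2 := ler_wpM2l hee hW2.
have hL3 : 0 <= Lg ^+ 3 by apply: exprn_ge0; lra.
have M10 : 0 <= eta^-1 ^+ 2 * beta^-1 ^+ 2 * Dt * Delta^-1 * Lg ^+ 3.
  exact: (mulr_ge0 (mulr_ge0 (mulr_ge0 (mulr_ge0 (exprn_ge0 2 ie0) (exprn_ge0 2 ib0))
     (ltW hD)) iDe0) hL3).
have h52 : 0 <= 8 * nkR + 52 by lra.
have hk0 : 0 <= kappa by lra.
have hQ : 0 <= (8 * nkR + 52) * kappa ^+ 4 * (eta * omega^-1 ^+ 2 * Dt^-1 ^+ 2 * eps^-1).
  exact: (mulr_ge0 (mulr_ge0 h52 (exprn_ge0 4 hk0)) (mulr_ge0 (mulr_ge0 (mulr_ge0 (ltW he)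
     (exprn_ge0 2 io0)) (exprn_ge0 2 iD0)) iep0)).
have hL4 : 0 <= 4 * Lg ^+ 3 - Lg.
  have : 1/4 <= Lg * Lg by nra.
  rewrite !exprS expr0; nra.
have := mulr_ge0 hQ hL4.
move: h1 h2 M10; rewrite !exprS !expr0.
lra.
Qed.


Lemma sum_part (R : realType) (Mt eta eps U1 U2 n1 n2 : R) (k1 K2 : nat) (m : nat -> R) (L : nat) :
  0 <= Mt -> 0 < eta -> 0 < eps -> n1 <= U1 -> n2 <= U2 -> 0 <= U1 -> 0 <= U2 ->
  (forall l, (1 <= l)%N -> 2 <= m l <= 4) -> Mlev m L <= 4 * eta / eps ->
  Ttotal m Mt k1 K2 n1 n2 L <=
  2 * Mt * (U1 * (k1%:R + 1) ^+ 2) + 8 * eta / eps * (U2 * (K2%:R + 1) ^+ 2).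
Proof.
move=> hMt he0 hep0 hn1 hn2 hU1 hU2 hm hML.
have hk10 : 0 <= (k1%:R : R) := ler0n _ _.
have hK20 : 0 <= (K2%:R : R) := ler0n _ _.
set W1 := U1 * (k1%:R + 1) ^+ 2.
set W2 := U2 * (K2%:R + 1) ^+ 2.
have hW1 : 0 <= W1 by rewrite /W1; apply: mulr_ge0 => //; apply: exprn_ge0; lra.
have hW2 : 0 <= W2 by rewrite /W2; apply: mulr_ge0 => //; apply: exprn_ge0; lra.
have hT : Ttotal m Mt k1 K2 n1 n2 L <=
   (\sum_(l < L.+1) (if Mlev m l <= Mt then Mlev m l else 0)) * W1
   + (\sum_(l < L.+1) Mlev m l) * W2.
  rewrite /Ttotal !mulr_suml -big_split /=; apply: ler_sum => l _.
  have hM1 := @Mlev_ge1 R m hm l.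
  rewrite /Klev /Nlev; case: ifP => h.
    have := @level_cost_le R (Mlev m l) k1 _ U1 ltac:(lra) hn1 hU1.
    have := mulr_ge0 (ltW (lt_le_trans ltr01 hM1)) hW2.
    rewrite /W1; lra.
  have := @level_cost_le R (Mlev m l) K2 _ U2 ltac:(lra) hn2 hU2.
  rewrite /W2; lra.
have hF := @sum_Mlev_le R m hm Mt L hMt.
have hG := @sum_Mlev R m hm L.
apply: le_trans hT _; apply: lerD.
  by apply: ler_wpM2r => //; lra.
by apply: ler_wpM2r => //; lra.
Qed.

Lemma nbounds (R : realType) (kappa : R) (nk : nat)
  (beta omega eta eps rho Dt Delta alpha2 : R) (K2 : nat) :
  1 <= kappa -> kappa <= 2 ^+ nk -> 0 < beta -> beta <= 1 -> 0 < omega -> omega < beta / 4 ->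
  0 < alpha2 -> alpha2^-1 <= kappa * omega^-1 ->
  0 < eta -> eta < 1 / 8 -> 0 < eps -> 0 < rho -> rho < 1 -> 0 < Dt -> Dt < 1 / 8 ->
  0 < Delta ->
  (K2%:R : R) <= kappa * Dt^-1 ->
  let Lg := ln (2 + (rho^-1 + beta^-1 + omega^-1 + eta^-1 + eps^-1 + Dt^-1 + Delta^-1)) in
  [/\ 1 / 2 <= Lg,
   NHR (alpha1 beta omega) rho eta eps (K1 eta beta omega) <= 1668 * Lg * (beta^-1 * beta^-1),
   NHR alpha2 rho eta eps K2 <=
     (8 * nk%:R + 52) * ((kappa * omega^-1) * (kappa * omega^-1)) * Lg,
   (K1 eta beta omega)%:R + 1 <= 16 * eta^-1 * Lg &
   (K2%:R : R) + 1 <= 2 * kappa * Dt^-1].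
Proof.
move=> hk hnk hb0 hb1 ho0 hob ha0 hia he0 he8 hep0 hr0 hr1 hD0 hD8 hDe0 hK2 Lg0.
have ib0 : 0 < beta^-1 by rewrite invr_gt0.
have io0 : 0 < omega^-1 by rewrite invr_gt0.
have ie0 : 0 < eta^-1 by rewrite invr_gt0.
have iep0 : 0 < eps^-1 by rewrite invr_gt0.
have ir0 : 0 < rho^-1 by rewrite invr_gt0.
have iD0 : 0 < Dt^-1 by rewrite invr_gt0.
have iDe0 : 0 < Delta^-1 by rewrite invr_gt0.
have [Y hYdef] : exists Y, Y = 2 + (rho^-1 + beta^-1 + omega^-1 + eta^-1 + eps^-1
                                     + Dt^-1 + Delta^-1) by eexists.
rewrite /Lg0 -hYdef.
have hY2 : 2 <= Y by rewrite hYdef; lra.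
have hYb : beta^-1 <= Y by rewrite hYdef; lra.
have hYe : eta^-1 <= Y by rewrite hYdef; lra.
have hYep : eps^-1 + 1 <= Y by rewrite hYdef; lra.
have hYr : rho^-1 <= Y by rewrite hYdef; lra.
have hYD : Dt^-1 + 1 <= Y by rewrite hYdef; lra.
clear hYdef Lg0.
have hLg : 1 / 2 <= ln Y.
  apply: le_trans (@ln2_ge R) _; rewrite ler_ln ?posrE //; lra.
have [Lg hLgdef] : exists Lg, Lg = ln Y by eexists.
have [hk1a hk1b] := @k1_bounds R Y beta omega eta hY2 hb0 hb1 ho0 hob he0 he8 hYb hYe.
have [hK2a hK2b] := @K2_bounds R Y kappa Dt nk K2 hY2 hk hnk hD0 hD8 hK2 hYD.
have hst := @st_common R Y rho eta eps hY2 hr0 hYr he0 ltac:(lra) hep0 hYep.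
rewrite -hLgdef in hLg hk1a hk1b hK2a hst *.
clear hLgdef hYb hYe hYep hYr hYD hY2 hnk hK2 ir0 iep0 iDe0 iD0.
set k1 := K1 eta beta omega in hk1a hk1b *.
split => //.
- have hia1 : (alpha1 beta omega)^-1 <= 4 * beta^-1.
    have := @inv_le R (beta / 4) (alpha1 beta omega) ltac:(lra) ltac:(rewrite /alpha1; lra).
    move=> h; apply: (le_trans h); rewrite invf_div; lra.
  have ha10 : 0 < alpha1 beta omega by rewrite /alpha1; lra.
  have hn1 := @NHR_le R (alpha1 beta omega) rho eta eps k1 (4 * beta^-1) (13 * Lg)
    ha10 hia1 ltac:(lra) ltac:(lra).
  have hib1 : 1 <= beta^-1 by have := @inv_le R _ _ hb0 hb1; rewrite invr1.
  have h1 : 1 <= beta^-1 * beta^-1 by nra.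
  have : 0 <= (beta^-1 * beta^-1 - 1) * Lg by apply: mulr_ge0; lra.
  lra.
- have hnk0 : 0 <= (nk%:R : R) := ler0n _ _.
  have hn2 := @NHR_le R alpha2 rho eta eps K2 (kappa * omega^-1) ((nk%:R + 6) * Lg)
    ha0 hia ltac:(apply: mulr_ge0; lra) ltac:(rewrite natrD in hK2a; lra).
  have hko : 4 <= kappa * omega^-1.
    have : 4 <= omega^-1.
      have := @inv_le R omega (1/4) ho0 ltac:(lra); rewrite div1r invrK //.
    nra.
  have h1 : 16 <= (kappa * omega^-1) * (kappa * omega^-1) by nra.
  have : 0 <= ((kappa * omega^-1) * (kappa * omega^-1) - 16) * Lg by apply: mulr_ge0; lra.
  have : 0 <= ((kappa * omega^-1) * (kappa * omega^-1)) * Lg * nk%:R.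
    by apply: mulr_ge0 => //; apply: mulr_ge0; lra.
  nra.
Qed.

Lemma ttotal_part (R : realType) (kappa : R) (nk : nat)
  (beta omega eta eps rho Dt Delta alpha2 : R) (K2 : nat) (m : nat -> R) (L : nat) :
  1 <= kappa -> kappa <= 2 ^+ nk -> 0 < beta -> beta <= 1 -> 0 < omega -> omega < beta / 4 ->
  0 < alpha2 -> alpha2^-1 <= kappa * omega^-1 ->
  0 < eta -> eta < 1 / 8 -> 0 < eps -> 0 < rho -> rho < 1 -> 0 < Dt -> Dt < 1 / 8 ->
  0 < Delta ->
  (K2%:R : R) <= kappa * Dt^-1 ->
  (forall l, (1 <= l)%N -> 2 <= m l <= 4) -> Mlev m L <= 4 * eta / eps ->
  Ttotal m (Dt / Delta) (K1 eta beta omega) K2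
     (NHR (alpha1 beta omega) rho eta eps (K1 eta beta omega))
     (NHR alpha2 rho eta eps K2) L
  <= 1000 * 1000 * (eta ^- 2 * beta ^- 2 * Dt * Delta^-1)
       * ln (2 + (rho^-1 + beta^-1 + omega^-1 + eta^-1 + eps^-1 + Dt^-1 + Delta^-1)) ^+ 3
   + 128 * (8 * nk%:R + 52) * kappa ^+ 4 * (eta * omega ^- 2 * Dt ^- 2 * eps^-1)
       * ln (2 + (rho^-1 + beta^-1 + omega^-1 + eta^-1 + eps^-1 + Dt^-1 + Delta^-1)) ^+ 3.
Proof.
move=> hk hnk hb0 hb1 ho0 hob ha0 hia he0 he8 hep0 hr0 hr1 hD0 hD8 hDe0 hK2 hm hML.
have [hLg hn1 hn2 hk1 hK2b] :=
  @nbounds R kappa nk beta omega eta eps rho Dt Delta alpha2 K2 hk hnk hb0 hb1 ho0 hob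
    ha0 hia he0 he8 hep0 hr0 hr1 hD0 hD8 hDe0 hK2.
move: hLg hn1 hn2 hk1.
set Lg := ln _ => hLg hn1 hn2 hk1.
set k1 := K1 eta beta omega in hn1 hk1 *.
set U1 := 1668 * Lg * _ in hn1.
set U2 := _ * Lg in hn2.
have hU1 : 0 <= U1.
  rewrite /U1; apply: mulr_ge0; [lra|]; apply: mulr_ge0; rewrite invr_ge0; lra.
have hko : 0 <= kappa * omega^-1 by apply: mulr_ge0; [lra|rewrite invr_ge0; lra].
have hnk0 : 0 <= (nk%:R : R) := ler0n _ _.
have hU2 : 0 <= U2.
  rewrite /U2; apply: mulr_ge0; [apply: mulr_ge0; [lra|exact: mulr_ge0]|lra].
have hDD : 0 <= Dt / Delta by apply: divr_ge0; lra.
have hT := @sum_part R (Dt / Delta) eta eps U1 U2 _ _ k1 K2 m L hDD he0 hep0 hn1 hn2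
  hU1 hU2 hm hML.
have hk10 : 0 <= (k1%:R : R) := ler0n _ _.
have hK20 : 0 <= (K2%:R : R) := ler0n _ _.
have hW1b : U1 * (k1%:R + 1) ^+ 2 <= U1 * ((16 * eta^-1 * Lg) * (16 * eta^-1 * Lg)).
  rewrite expr2; apply: ler_wpM2l => //; apply: ler_pM; lra.
have hW2b : U2 * (K2%:R + 1) ^+ 2 <= U2 * ((2 * kappa * Dt^-1) * (2 * kappa * Dt^-1)).
  rewrite expr2; apply: ler_wpM2l => //; apply: ler_pM; lra.
rewrite -!exprVn.
exact: (@final_arith R _ Dt Delta eta eps beta omega kappa nk%:R Lg _ _ _ _ he0 hep0 hb0 ho0
  hk hnk0 hLg hT hW1b hW2b).
Qed.

Lemma hML_lemma (R : realType) (m : nat -> R) (L : nat) (eta eps : R) :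
  (forall l, (1 <= l)%N -> 2 <= m l <= 4) -> 0 < eps -> eps < 2 * eta ->
  eta / Mlev m L <= eps -> (forall l, (l < L)%N -> eps < eta / Mlev m l) ->
  Mlev m L <= 4 * eta / eps.
Proof.
move=> hm he0 heps hL hLl.
move: hL hLl; case: L => [|L'] hL hLl.
  rewrite Mlev0 ler_pdivlMr //; lra.
have h := hLl L' (ltnSn L').
have hM1 := @Mlev_ge1 R m hm L'.
rewrite ltr_pdivlMr in h; last by lra.
have /andP[_ hm4] := hm L'.+1 isT.
rewrite MlevS ler_pdivlMr //.
have : 0 <= (4 - m L'.+1) * Mlev m L' * eps.
  by apply: mulr_ge0; [apply: mulr_ge0|]; lra.
lra.
Qed.

Theorem theorem7 (R : realType) (kappa : R) (hkappa : 1 <= kappa) :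
  exists (c : R) (k : nat), 0 < c /\
  forall (S : nat) (p : 'I_S -> R) (pres : R) (lam : 'I_S -> R)
         (Delta beta omega eps rho Dt C eta alpha2 : R) (K2 : nat)
         (m : nat -> R) (L : nat),
    (* initial state: weights |c_s|^2 = p s, |c_res|^2 = pres *)
    (forall s, beta <= p s) -> 0 <= pres -> pres <= omega ->
    \sum_(s < S) p s + pres = 1 ->
    0 < beta -> 0 < omega -> omega < beta ->
    (* eigenvalues in [0, 0.9] and gap *)
    (forall s, 0 <= lam s <= 9 / 10) ->
    is_gap lam Delta -> 0 < Delta ->
    (* accuracy, failure probability *)
    0 < eps -> eps < 2 * eta -> 0 < rho < 1 ->
    (* parameters *)
    0 < Dt < 1 / (8 * S%:R * (2 * S%:R - 1)) ->
    ~~ odd K2 -> 4 / Dt < K2%:R ->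
    2 < C < K2%:R * Dt / 2 ->
    constA S beta C K2 * omega < eta < 1 / (8 * S%:R * (2 * S%:R - 1)) ->
    0 < alpha2 ->
    alpha2 < Num.min
               (C * beta / (8 * (C - 1) * Num.sqrt (2 * S%:R))
                  * Num.sqrt (1 - 2 * (C - 1) * S%:R / (C * K2%:R)))
               (eta / constA S beta C K2) - omega ->
    (* "constant-order" quantities hidden in the O-constants *)
    K2%:R * Dt <= kappa -> omega <= kappa * alpha2 ->
    (* the refinement factors m_l in [2,4], and L the stopping level *)
    (forall l, (1 <= l)%N -> 2 <= m l <= 4) ->
    eta / Mlev m L <= eps -> (forall l, (l < L)%N -> eps < eta / Mlev m l) ->
    let Mt := Dt / Delta in
    let k1 := K1 eta beta omega in
    let n1 := NHR (alpha1 beta omega) rho eta eps k1 in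
    let n2 := NHR alpha2 rho eta eps K2 in
    let polylog := (ln (2 + (rho^-1 + beta^-1 + omega^-1 + eta^-1 + eps^-1
                              + Dt^-1 + Delta^-1))) ^+ k in
    Tmax m Mt k1 K2 L
      <= c * Num.max (ln (2 / beta) * eta^-1 * Dt * Delta^-1)
                     (eta * Dt^-1 * eps^-1)
    /\
    Ttotal m Mt k1 K2 n1 n2 L
      <= c * (eta ^- 2 * beta ^- 2 * Dt * Delta^-1
              + eta * omega ^- 2 * Dt ^- 2 * eps^-1) * polylog.

Proof.
have [nk hnk] : exists nk : nat, kappa <= 2 ^+ nk.
  exists `|Num.ceil kappa|%N.
  have h1 : (Num.ceil kappa)%:~R <= ((`|Num.ceil kappa|%N)%:R : R).
    by rewrite natr_absz ler_int; exact: ler_norm.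
  have h2 : ((`|Num.ceil kappa|%N)%:R : R) <= 2 ^+ `|Num.ceil kappa|%N.
    by rewrite -natrX ler_nat ltnW // ltn_expl.
  have := ceil_ge kappa; lra.
pose c : R := 1000 * 1000 + 128 * (8 * nk%:R + 52) * kappa ^+ 4 + 16 + 4 * kappa.
have k4 : 1 <= kappa ^+ 4 by rewrite exprn_ege1.
have hnk0 : 0 <= (nk%:R : R) by [].
exists c, 3%N; split.
  rewrite /c; nra.
move=> S p pres lam Delta beta omega eps rho Dt C eta alpha2 K2 m L hp hpres0 hpres
  hsum hb0 ho0 hob hlam hgap hD0 he0 heps /andP[hr0 hr1] /andP[hDt0 hDt1] hK2e hK2
  /andP[hC2 hC3] /andP[heA heta1] ha20 ha2 hK2Dt hoa hm hL hLl Mt k1 n1 n2 polylog.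
have hS : (0 < S)%N.
  case: (posnP S) => [S0|//]; move: hDt1; rewrite S0 /= !mulr0 mul0r invr0 mulr0; lra.
have hSR : 1 <= (S%:R : R) by rewrite ler1n.
have hinv : 1 / (8 * S%:R * (2 * S%:R - 1)) <= (1 / 8 : R).
  rewrite !div1r lef_pV2 ?posrE; nra.
have hDt8 : Dt < 1 / 8 by lra.
have heta8 : eta < 1 / 8 by lra.
have hb1 : beta <= 1.
  pose i0 : 'I_S := Ordinal hS.
  have : p i0 <= \sum_(s < S) p s.
    rewrite (bigD1 i0) //= lerDl; apply: sumr_ge0 => s _; apply: le_trans (hp s); lra.
  have := hp i0; lra.
clear hlam hgap.
have hK2pos : 0 < (K2%:R : R).
  have : 0 < 4 / Dt by apply: divr_gt0; lra.
  lra.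
have [hom ha2b] : omega < beta / 4 /\ alpha2 < beta / 4.
  move: ha2.
  set sq1 := Num.sqrt (2 * S%:R).
  set t := 2 * (C - 1) * S%:R / (C * K2%:R).
  set b := eta / _.
  have s1 : 1 <= sq1 by rewrite /sq1 -[X in X <= _]sqrtr1 ler_wsqrtr //; lra.
  have t0 : 0 <= t.
    rewrite /t; apply: divr_ge0; apply: mulr_ge0; try apply: mulr_ge0; lra.
  have s2 : Num.sqrt (1 - t) <= 1 by rewrite -[X in _ <= X]sqrtr1 ler_wsqrtr //; lra.
  have s3 : 0 <= Num.sqrt (1 - t) := sqrtr_ge0 _.
  have hx : C * beta / (8 * (C - 1) * sq1) <= beta / 4.
    rewrite ler_pdivrMr; last by apply: mulr_gt0; lra.
    have : 0 <= beta * (C - 1) * (sq1 - 1) by apply: mulr_ge0; [apply: mulr_ge0|]; lra.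
    nra.
  have hx0 : 0 <= C * beta / (8 * (C - 1) * sq1).
    apply: divr_ge0; [apply: mulr_ge0|apply: mulr_ge0; [apply: mulr_ge0|]]; lra.
  have hmin : forall u v : R, Num.min u v <= u by move=> u v; rewrite ge_min lexx.
  have := hmin (C * beta / (8 * (C - 1) * sq1) * Num.sqrt (1 - t)) b.
  split; nra.
have hK2le : (K2%:R : R) <= kappa * Dt^-1 by rewrite ler_pdivlMr.
have hio : alpha2^-1 <= kappa * omega^-1.
  by rewrite -ler_pdivrMr ?invr_gt0 // invrK mulrC ler_pdivrMr.
have heta0 : 0 < eta by lra.
have hML := @hML_lemma R m L eta eps hm he0 heps hL hLl.
clear hL hLl hK2Dt hoa ha2 heA hK2 hC2 hC3 hK2e hDt1 heta1 hinv hp hsum hpres hpres0.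
have T1 := @tmax_part R kappa beta omega eta eps Dt Delta K2 m L hkappa hb0 hb1 ho0 hom
  heta0 heta8 he0 hDt0 hD0 hK2le hm hML.
have T2 := @ttotal_part R kappa nk beta omega eta eps rho Dt Delta alpha2 K2 m L hkappa hnk
  hb0 hb1 ho0 hom ha20 hio heta0 heta8 he0 hr0 hr1 hDt0 hDt8 hD0 hK2le hm hML.
split.
  apply: le_trans T1 _; apply: ler_wpM2r.
    rewrite le_max; apply/orP; left.
    repeat apply: mulr_ge0; rewrite ?invr_ge0; try lra.
    apply: ln_ge0; rewrite ler_pdivlMr //; lra.
  rewrite /c; nra.
apply: le_trans T2 _.
rewrite /polylog.
set Lg := ln _.
have hLg : 0 <= Lg.
  apply: ln_ge0.
  have : 0 <= rho^-1 + beta^-1 + omega^-1 + eta^-1 + eps^-1 + Dt^-1 + Delta^-1.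
    by rewrite !addr_ge0 // invr_ge0; lra.
  lra.
set P1 := eta ^- 2 * _ * _ * _.
set P2 := eta * _ * _ * _.
have hP1 : 0 <= P1.
  rewrite /P1; repeat apply: mulr_ge0; rewrite ?invr_ge0 ?exprn_ge0; lra.
have hP2 : 0 <= P2.
  rewrite /P2; repeat apply: mulr_ge0; rewrite ?invr_ge0 ?exprn_ge0; lra.
have hL3 : 0 <= Lg ^+ 3 := exprn_ge0 3 hLg.
have a1 := mulr_ge0 hP1 hL3.
have a2 := mulr_ge0 hP2 hL3.
have hk4 : 0 <= kappa ^+ 4 by apply: exprn_ge0; lra.
have a3 : 0 <= 128 * (8 * nk%:R + 52) * kappa ^+ 4 by apply: mulr_ge0 => //; lra.
have := mulr_ge0 a3 a2.
have := mulr_ge0 a3 a1.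
have hc1 : 0 <= (16 + 4 * kappa) * (P1 * Lg ^+ 3 + P2 * Lg ^+ 3).
  by apply: mulr_ge0; lra.
have hc2 : 0 <= 1000 * 1000 * (P2 * Lg ^+ 3) by apply: mulr_ge0; lra.
rewrite /c; nra.
Qed.
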